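(* Let $\lambda\ge0$. For all integers $k,m\ge1$ there exists $t$ with the following property. Let $G$ be a $\lambda$-spread digraph such that no vertex of $G$ is $(k,m)$-rich. Then $V(G)$ can be partitioned into $t$ sets $X_1,\dots,X_t$ such that for each $1\le i\le t$, either no $(m+1)$-clique of $G[X_i]$ has a source, or no $(m+1)$-clique of $G[X_i]$ has a sink.
   Context: Digraphs are finite, with no loops, parallel edges or antiparallel pairs; $G^*$ is the underlying undirected graph. $N^+(v)$, $N^-(v)$ are the out- and in-neighbourhoods of $v$. A digraph $G$ is $\lambda$-spread if for every vertex $v$ and all $A\subseteq N^+(v)$, $B\subseteq N^-(v)$ with $|A|=|B|=\lambda$, some vertex of $A$ is $G^*$-adjacent with some vertex of $B$. A $k$-clique is a clique (in $G^*$) of cardinality $k$. For a clique $X$ of $G$, a vertex of $X$ is a source of $X$ if it is adjacent to every other vertex of $X$, and a sink if it is adjacent from every other vertex of $X$. For $A,B\subseteq V(G)$, $A$ is $G^*$-complete with $B$ if $A\cap B=\emptyset$ and every vertex of $A$ is $G^*$-adjacent with every vertex of $B$. A vertex $v$ is $(k,m)$-rich if there exist $k$ pairwise disjoint $m$-cliques $A_1,\dots,A_k\subseteq N^+(v)$ and $k$ pairwise disjoint $m$-cliques $B_1,\dots,B_k\subseteq N^-(v)$ such that $A_1\cup\dots\cup A_k$ is $G^*$-complete with $B_1\cup\dots\cup B_k$. *)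

(* Defs.v *)
From mathcomp Require Import all_boot.
Set Implicit Arguments. Unset Strict Implicit. Unset Printing Implicit Defensive.

Section DigraphDefs.
Variable T : finType.
Variable E : rel T.

(* no loops, no antiparallel pairs (parallel edges impossible for a relation) *)
Definition is_digraph : Prop :=
  (forall v, ~~ E v v) /\ (forall u v, E u v -> ~~ E v u).

Definition adjU (u v : T) : bool := E u v || E v u.

Definition outN (v : T) : {set T} := [set u | E v u].
Definition inN (v : T) : {set T} := [set u | E u v].

Definition spread (lam : nat) : Prop :=
  forall (v : T) (A B : {set T}),
    A \subset outN v -> B \subset inN v -> #|A| = lam -> #|B| = lam ->
    exists a, exists b, [/\ a \in A, b \in B & adjU a b].

Definition clique (X : {set T}) : Prop :=
  forall u v, u \in X -> v \in X -> u != v -> adjU u v.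

Definition kclique (k : nat) (X : {set T}) : Prop := clique X /\ #|X| = k.

Definition complete (A B : {set T}) : Prop :=
  [disjoint A & B] /\ (forall a b, a \in A -> b \in B -> adjU a b).

Definition rich (k m : nat) (v : T) : Prop :=
  exists (As Bs : 'I_k -> {set T}),
    [/\ forall i, kclique m (As i) /\ As i \subset outN v,
        forall i, kclique m (Bs i) /\ Bs i \subset inN v,
        forall i j, i != j -> [disjoint As i & As j],
        forall i j, i != j -> [disjoint Bs i & Bs j]
      & complete (\bigcup_i As i) (\bigcup_i Bs i)].

Definition is_source (X : {set T}) (x : T) : Prop :=
  x \in X /\ forall y, y \in X -> y != x -> E x y.
Definition is_sink (X : {set T}) (x : T) : Prop :=
  x \in X /\ forall y, y \in X -> y != x -> E y x.

End DigraphDefs.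

(* Main.v *)
Require Import Defs.
From mathcomp Require Import all_boot.
From mathcomp Require Import zify.
From Stdlib Require Import Classical ClassicalEpsilon.
Set Implicit Arguments. Unset Strict Implicit. Unset Printing Implicit Defensive.
Lemma php (D C : finType) (g : D -> C) M :
  (M.-1) * #|C| < #|D| -> exists c, M <= #|[set x | g x == c]|.
Proof.
move=> H.
case: (boolP [exists c, M <= #|[set x | g x == c]|]) => [/existsP//|/existsP Hn].
exfalso.
have E : #|D| = \sum_(c : C) #|[set x | g x == c]|.
  rewrite -sum1_card (partition_big g xpredT) //=.
  apply: eq_bigr => c _; rewrite -sum1_card; apply: eq_bigl => x; by rewrite inE.
have : #|D| <= \sum_(c : C) M.-1.
  rewrite E; apply: leq_sum => c _.
  have : ~~ (M <= #|[set x | g x == c]|) by apply/negP => h; apply: Hn; exists c.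
  rewrite -ltnNge; lia.
rewrite sum_nat_const.
move: H; rewrite mulnC => H h; have h2 : #|D| <= #|C| * M.-1 by exact: h.
lia.
Qed.

Lemma ramsey (K : finType) r n M (f : 'I_r -> 'I_n -> K) :
  (M.-1)*#|K| < r -> (M.-1) * #|K|^r < n ->
  exists c (Rs : {set 'I_r}) (Cs : {set 'I_n}),
    [/\ M <= #|Rs|, M <= #|Cs| & forall i j, i \in Rs -> j \in Cs -> f i j = c].
Proof.
move=> Hr Hn.
have [v Hv] : exists v, M <= #|[set j | [ffun i => f i j] == v]|.
  by apply: php; rewrite card_ffun !card_ord.
have [c Hc] : exists c, M <= #|[set i | v i == c]|.
  by apply: php; rewrite card_ord.
exists c, [set i | v i == c], [set j | [ffun i => f i j] == v]; split => //.
move=> i j; rewrite !inE => /eqP <- /eqP <-; by rewrite ffunE.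
Qed.

Lemma disjI (T : finType) (A B : {set T}) :
  (forall x, x \in A -> x \in B -> False) -> [disjoint A & B].
Proof.
move=> h; rewrite disjoints_subset; apply/subsetP => x hx; rewrite inE.
apply/negP => hb; exact: h x hx hb.
Qed.
Lemma disjE (T : finType) (A B : {set T}) x :
  [disjoint A & B] -> x \in A -> x \in B -> False.
Proof. by move=> /disjointFr h /h ->. Qed.

Section Hit.
Variable T : finType.
Variable E : rel T.
Variable m : nat.

Definition famD n (F : 'I_n -> {set T}) (U : {set T}) :=
  (forall i, kclique E m (F i) /\ F i \subset U) /\
  (forall i j, i != j -> [disjoint F i & F j]).

Definition hits (S U : {set T}) :=
  forall X, kclique E m X -> X \subset U -> exists y, y \in X /\ y \in S.

Lemma hitting p : forall U : {set T},
  (exists F : 'I_p.+1 -> {set T}, famD F U) \/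
  (exists S : {set T}, #|S| <= p * m /\ hits S U).
Proof.
elim: p => [|p IH] U.
  case: (classic (exists X, kclique E m X /\ X \subset U)) => [[X [HX HXU]]|HN].
    left; exists (fun _ => X); split => // i j; by rewrite !ord1.
  right; exists set0; split; first by rewrite cards0.
  move=> X HX HXU; exfalso; apply: HN; by exists X.
case: (classic (exists X, kclique E m X /\ X \subset U)) => [[X [HX HXU]]|HN]; last first.
  right; exists set0; split; first by rewrite cards0.
  move=> Y HY HYU; exfalso; apply: HN; by exists Y.
case: (IH (U :\: X)) => [[F [HF1 HF2]]|[S [HS1 HS2]]].
  left; exists (fun i => if unlift ord0 i is Some j then F j else X); split.
    move=> i; case: unliftP => [j _|_]; last by [].
    have [h1 h2] := HF1 j; split => //; apply: (subset_trans h2); exact: subsetDl.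
  move=> i j; case: unliftP => [i' ->|->]; case: unliftP => [j' ->|->] //.
  - move=> hne; apply: HF2; apply: contra hne => /eqP ->; by [].
  - move=> _; have [_ h2] := HF1 i'.
    apply: disjI => x hx1 hx2; move: (subsetP h2 x hx1); by rewrite !inE hx2.
  - move=> _; have [_ h2] := HF1 j'.
    apply: disjI => x hx1 hx2; move: (subsetP h2 x hx2); by rewrite !inE hx1.
right; exists (S :|: X); split.
  have := cardsU S X; have [_ ->] := HX; rewrite mulSn; lia.
move=> Y HY HYU.
case: (classic (exists y, y \in Y /\ y \in X)) => [[y [h1 h2]]|HN].
  by exists y; rewrite inE h2 orbT.
have [y [h1 h2]] : exists y, y \in Y /\ y \in S.
  apply: HS2 => //; apply/subsetP => y hy; rewrite !inE (subsetP HYU) // andbT.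
  apply/negP => hx; apply: HN; by exists y.
by exists y; rewrite inE h2.
Qed.
End Hit.

Lemma card_sum (T : finType) (A : {set T}) (P : pred T) :
  #|[set u in A | P u]| = \sum_(u in A) (P u : nat).
Proof.
rewrite -sum1_card (eq_bigl (fun u => (u \in A) && P u)); last by move=> u; rewrite inE.
rewrite big_mkcondr /=; apply: eq_bigr => u _; by case: (P u).
Qed.

Section Col.
Variable T : finType.
Variable S : T -> {set T}.
Variable s : nat.
Hypothesis HS : forall v, #|S v| <= s.
Hypothesis HSv : forall v, v \notin S v.

Lemma low_deg (W : {set T}) : W != set0 ->
  exists2 w, w \in W & #|[set u in W | (u \in S w) || (w \in S u)]| <= s.*2.
Proof.
move=> HW.
case: (boolP [exists w in W, #|[set u in W | (u \in S w) || (w \in S u)]| <= s.*2]).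
  by move=> /exists_inP [w h1 h2]; exists w.
move=> /exists_inP Hn; exfalso.
have H1 : \sum_(w in W) #|[set u in W | u \in S w]| <= #|W| * s.
  rewrite -sum_nat_const; apply: leq_sum => w _.
  apply: leq_trans (HS w); apply: subset_leq_card; apply/subsetP => u.
  by rewrite inE => /andP [].
have H2 : \sum_(w in W) #|[set u in W | w \in S u]| <= #|W| * s.
  under eq_bigr => w _ do rewrite card_sum.
  rewrite exchange_big /=.
  under eq_bigr => u _ do rewrite -(card_sum W (fun w => w \in S u)).
  rewrite -sum_nat_const; apply: leq_sum => u _.
  apply: leq_trans (HS u); apply: subset_leq_card; apply/subsetP => w.
  by rewrite inE => /andP [].
have H3 : \sum_(w in W) s.*2.+1 <=
   \sum_(w in W) (#|[set u in W | u \in S w]| + #|[set u in W | w \in S u]|).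
  apply: leq_sum => w hw.
  have h : ~~ (#|[set u in W | (u \in S w) || (w \in S u)]| <= s.*2).
    by apply/negP => h; apply: Hn; exists w.
  rewrite -ltnNge in h; apply: leq_trans h _.
  have -> : [set u in W | (u \in S w) || (w \in S u)] =
     [set u in W | u \in S w] :|: [set u in W | w \in S u].
    by apply/setP => u; rewrite !inE andb_orr.
  exact: leq_card_setU.
rewrite big_split /= sum_nat_const in H3.
have : 0 < #|W| by rewrite card_gt0.
lia.
Qed.

Lemma coloring_set n : forall W : {set T}, #|W| <= n ->
  exists g : T -> 'I_s.*2.+1,
    forall u v, u \in W -> v \in W -> u \in S v -> g u != g v.
Proof.
elim: n => [|n IH] W HW.
  exists (fun _ => ord0) => u v hu; exfalso.
  move: HW; rewrite leqn0 => /eqP /cards0_eq h; by rewrite h inE in hu.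
case: (eqVneq W set0) => [->|HW0].
  by exists (fun _ => ord0) => u v; rewrite inE.
have [w hw hdeg] := low_deg HW0.
have [g Hg] : exists g : T -> 'I_s.*2.+1,
    forall u v, u \in W :\ w -> v \in W :\ w -> u \in S v -> g u != g v.
  apply: IH; have := cardsD1 w W; rewrite hw; lia.
set Nb := [set u in W | (u \in S w) || (w \in S u)] in hdeg.
have [c hc] : exists c, c \notin g @: Nb.
  have h : #|g @: Nb| < #|'I_s.*2.+1|.
    rewrite card_ord; apply: leq_ltn_trans (leq_imset_card _ _) _; lia.
  have : 0 < #|~: (g @: Nb)| by rewrite cardsCs setCK card_ord; rewrite card_ord in h; lia.
  by rewrite card_gt0 => /set0Pn [c]; rewrite inE => hc; exists c.
exists (fun x => if x == w then c else g x) => u v hu hv huv.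
case: (eqVneq u w) => [Eu|Nu]; case: (eqVneq v w) => [Ev|Nv].
- by move: huv; rewrite Eu Ev (negbTE (HSv w)).
- apply/eqP => E; move: hc; rewrite E; apply/negP/negPn/imsetP.
  exists v => //; by rewrite inE hv -Eu huv orbT.
- apply/eqP => E; move: hc; rewrite -E; apply/negP/negPn/imsetP.
  exists u => //; by rewrite inE hu -Ev huv.
- apply: Hg => //; by rewrite !inE ?Nu ?Nv.
Qed.

Lemma coloring : exists g : T -> 'I_s.*2.+1, forall u v, u \in S v -> g u != g v.
Proof.
have [g Hg] := @coloring_set #|[set: T]| [set: T] (leqnn _).
by exists g => u v; apply: Hg; rewrite inE.
Qed.
End Col.


Lemma pick_inj (I : finType) (A : {set I}) k : k <= #|A| ->
  exists h : 'I_k -> I, injective h /\ forall i, h i \in A.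
Proof.
move=> hk; exists (fun i => enum_val (widen_ord hk i)); split.
  by move=> i j /enum_val_inj /(congr1 val) /= /val_inj.
by move=> i; apply: enum_valP.
Qed.

Lemma sub_card (I : finType) (A : {set I}) n : n <= #|A| ->
  exists2 B : {set I}, B \subset A & #|B| = n.
Proof.
move=> /pick_inj [h [hi hA]]; exists (h @: setT).
  by apply/subsetP => x /imsetP [i _ ->].
by rewrite card_imset // cardsT card_ord.
Qed.

Section Key.
Variable T : finType.
Variable E : rel T.
Variables (lam k m : nat).
Hypothesis HD : is_digraph E.
Hypothesis HSp : spread E lam.

Definition elt (x0 : T) (X : {set T}) (j : 'I_m) : T := nth x0 (enum X) j.

Lemma elt_mem x0 (X : {set T}) j : #|X| = m -> elt x0 X j \in X.
Proof. by move=> h; rewrite /elt -mem_enum mem_nth // -cardE h. Qed.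

Lemma elt_pos x0 (X : {set T}) x : #|X| = m -> x \in X -> exists j, elt x0 X j = x.
Proof.
move=> h hx.
have hi : index x (enum X) < m by rewrite -h cardE index_mem mem_enum.
by exists (Ordinal hi); rewrite /elt /= nth_index // mem_enum.
Qed.

Definition col x0 (A B : {set T}) : option ('I_m * 'I_m) :=
  [pick ab : 'I_m * 'I_m | ~~ adjU E (elt x0 A ab.1) (elt x0 B ab.2)].

Lemma key (v : T) r n (As : 'I_r -> {set T}) (Bs : 'I_n -> {set T}) :
  famD E m As (outN E v) -> famD E m Bs (inN E v) ->
  ((maxn k lam).-1) * #|{: option ('I_m * 'I_m)}| < r ->
  ((maxn k lam).-1) * #|{: option ('I_m * 'I_m)}| ^ r < n ->
  rich E k m v.
Proof.
move=> [HA1 HA2] [HB1 HB2] Hr Hn.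
have [c [Rs [Cs [HRs HCs Hc]]]] := ramsey (fun i j => col v (As i) (Bs j)) Hr Hn.
have Hout : forall x, x \in outN E v -> x \in inN E v -> False.
  move=> x; rewrite !inE => h1 h2; have [_ h] := HD; by move: (h _ _ h1); rewrite h2.
case: c Hc => [[p q]|] Hc.
  exfalso.
  have [Rs' hR1 hR2] := @sub_card _ Rs lam (leq_trans (leq_maxr k lam) HRs).
  have [Cs' hC1 hC2] := @sub_card _ Cs lam (leq_trans (leq_maxr k lam) HCs).
  have [a [b [ha hb hab]]] : exists a b, [/\ a \in [set elt v (As i) p | i in Rs'],
     b \in [set elt v (Bs j) q | j in Cs'] & adjU E a b].
    apply: HSp.
  - apply/subsetP => x /imsetP [i _ ->]; have [[_ h] h'] := HA1 i.
    by apply: (subsetP h'); apply: elt_mem.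
  - apply/subsetP => x /imsetP [i _ ->]; have [[_ h] h'] := HB1 i.
    by apply: (subsetP h'); apply: elt_mem.
  - rewrite card_in_imset // => i j _ _ hij; apply/eqP; apply/negPn/negP => hne.
    have [[_ hi] _] := HA1 i; have [[_ hj] _] := HA1 j.
    apply: (disjE (HA2 _ _ hne) (elt_mem v p hi)); by rewrite hij elt_mem.
  - rewrite card_in_imset // => i j _ _ hij; apply/eqP; apply/negPn/negP => hne.
    have [[_ hi] _] := HB1 i; have [[_ hj] _] := HB1 j.
    apply: (disjE (HB2 _ _ hne) (elt_mem v q hi)); by rewrite hij elt_mem.
  move: ha hb hab => /imsetP [i hi ->] /imsetP [j hj ->] hab.
  have := Hc i j (subsetP hR1 _ hi) (subsetP hC1 _ hj).
  rewrite /col; case: pickP => [ab hnab|] //= [Hab].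
  by rewrite Hab /= hab in hnab.
have [hR [hRi hRA]] := pick_inj (leq_trans (leq_maxl k lam) HRs).
have [hC [hCi hCA]] := pick_inj (leq_trans (leq_maxl k lam) HCs).
exists (fun i => As (hR i)), (fun j => Bs (hC j)); split.
- move=> i; exact: HA1.
- move=> i; exact: HB1.
- move=> i j hij; apply: HA2; apply: contra hij => /eqP /hRi ->; by [].
- move=> i j hij; apply: HB2; apply: contra hij => /eqP /hCi ->; by [].
split.
  apply: disjI => x /bigcupP [i _ hi] /bigcupP [j _ hj].
  have [_ h1] := HA1 (hR i); have [_ h2] := HB1 (hC j).
  exact: (Hout x (subsetP h1 _ hi) (subsetP h2 _ hj)).
move=> a b /bigcupP [i _ hi] /bigcupP [j _ hj].
have [[_ ci] _] := HA1 (hR i); have [[_ cj] _] := HB1 (hC j).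
have [p <-] := elt_pos v ci hi; have [q <-] := elt_pos v cj hj.
have := Hc _ _ (hRA i) (hCA j); rewrite /col; case: pickP => [ab _|h] //.
move=> _; move: (h (p, q)) => /= /negbFE; by [].
Qed.
End Key.


Lemma clique_sub (T : finType) (E : rel T) (X Y : {set T}) :
  clique E X -> Y \subset X -> clique E Y.
Proof. move=> h hs u v hu hv; apply: h; exact: (subsetP hs). Qed.

Theorem theorem3p2 (lam : nat) :
  forall k m : nat, 1 <= k -> 1 <= m ->
  exists t : nat,
    forall (T : finType) (E : rel T),
      is_digraph E -> spread E lam -> (forall v, ~ rich E k m v) ->
      exists f : T -> 'I_t,
        forall i : 'I_t,
          (forall X : {set T}, X \subset [set x | f x == i] ->
             kclique E m.+1 X -> forall x, ~ is_source E X x)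
          \/
          (forall X : {set T}, X \subset [set x | f x == i] ->
             kclique E m.+1 X -> forall x, ~ is_sink E X x).
Proof.
move=> k m hk hm.
pose C := #|{: option ('I_m * 'I_m)}|.
pose M := maxn k lam.
pose pr := M * C.
pose pn := M * C ^ pr.+1.
pose s := pr * m + pn * m.
exists #|{: bool * 'I_s.*2.+1}| => T E HD HSp Hrich.
have Hv : forall v : T, exists bS : bool * {set T},
    [/\ #|bS.2| <= s, v \notin bS.2 &
        hits E m bS.2 (if bS.1 then outN E v else inN E v)].
  move=> v.
  have Hrm : forall (b : bool) (S : {set T}), #|S| <= s ->
      hits E m S (if b then outN E v else inN E v) ->
      exists bS : bool * {set T},
      [/\ #|bS.2| <= s, v \notin bS.2 &
          hits E m bS.2 (if bS.1 then outN E v else inN E v)].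
    move=> b S h1 h2; exists (b, S :\ v); split => /=.
    - by apply: leq_trans h1; apply: subset_leq_card; apply: subsetDl.
    - by rewrite !inE eqxx.
    move=> X hX hXU; have [y [hy1 hy2]] := h2 X hX hXU.
    exists y; split => //; rewrite !inE hy2 andbT.
    apply/eqP => Ey; have [h0 _] := HD; move: (subsetP hXU y hy1).
    case: b {h2 hXU} => /=; rewrite inE Ey; by rewrite (negbTE (h0 v)).
  case: (hitting E m pr (outN E v)) => [[F HF]|[S [HS1 HS2]]]; last first.
    apply: (Hrm true S) => //; rewrite /s; lia.
  case: (hitting E m pn (inN E v)) => [[G HG]|[S [HS1 HS2]]]; last first.
    apply: (Hrm false S) => //; rewrite /s; lia.
  exfalso; apply: (Hrich v); apply: (key HD HSp HF HG).
  - rewrite ltnS /pr; apply: leq_mul => //; exact: leq_pred.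
  - rewrite ltnS /pn; apply: leq_mul => //; exact: leq_pred.
pose bS := fun v => proj1_sig (constructive_indefinite_description _ (Hv v)).
have HbS : forall v, [/\ #|(bS v).2| <= s, v \notin (bS v).2 &
        hits E m (bS v).2 (if (bS v).1 then outN E v else inN E v)].
  move=> v; exact: (proj2_sig (constructive_indefinite_description _ (Hv v))).
have [g Hg] : exists g : T -> 'I_s.*2.+1, forall u v, u \in (bS v).2 -> g u != g v.
  apply: coloring => v; by case: (HbS v).
exists (fun v => enum_rank ((bS v).1, g v)) => i.
have Hpart : forall y, y \in [set x | enum_rank ((bS x).1, g x) == i] ->
    ((bS y).1, g y) = enum_val i.
  by move=> y; rewrite inE => /eqP <-; rewrite enum_rankK.
case Ei: (enum_val i) => [b c].
case: b Ei => Ei; [left|right] => X HX [HXc HXs] x [hx hsrc].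
- have [_ _ Hh] := HbS x; have := Hpart x (subsetP HX x hx); rewrite Ei => [[Hb Hgx]].
  rewrite Hb in Hh.
  have [y [hy1 hy2]] : exists y, y \in X :\ x /\ y \in (bS x).2.
    apply: Hh.
    split; first by apply: clique_sub HXc _; apply: subsetDl.
    by have := cardsD1 x X; rewrite hx HXs add1n => [[]].
    apply/subsetP => y; rewrite !inE => /andP [hne hy]; exact: hsrc.
  have := Hpart y (subsetP HX y (subsetP (subsetDl X [set x]) y hy1)).
  rewrite Ei => [[_ Hgy]]; move: (Hg _ _ hy2); by rewrite Hgy Hgx eqxx.
- have [_ _ Hh] := HbS x; have := Hpart x (subsetP HX x hx); rewrite Ei => [[Hb Hgx]].
  rewrite Hb in Hh.
  have [y [hy1 hy2]] : exists y, y \in X :\ x /\ y \in (bS x).2.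
    apply: Hh.
    split; first by apply: clique_sub HXc _; apply: subsetDl.
    by have := cardsD1 x X; rewrite hx HXs add1n => [[]].
    apply/subsetP => y; rewrite !inE => /andP [hne hy]; exact: hsrc.
  have := Hpart y (subsetP HX y (subsetP (subsetDl X [set x]) y hy1)).
  rewrite Ei => [[_ Hgy]]; move: (Hg _ _ hy2); by rewrite Hgy Hgx eqxx.
Qed.
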